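(* Let $H$, $L$ be as in the context. For every feasible solution $(S,\mathcal T_0)$, $\omega_{LB}:=\lceil\omega(H)/L\rceil\le\omega(H_{\mathcal T_0})$.
   Context: Notation: $[n)=\{0,1,\dots,n-1\}$. Let $M,N,Z$ be positive integers and let $H$ be a binary $MZ\times NZ$ matrix made of $M\times N$ blocks, each a $Z\times Z$ circulant; assume $H$ has no zero row and no two identical rows. For $\mathcal A\subseteq[MZ)$, $H_{\mathcal A}$ is the submatrix of rows indexed by $\mathcal A$; $\omega(A)$ is the maximum Hamming weight of a column of $A$. For $i\in[MZ)$ and integer $s$, $\pi^s(i)=Z\lfloor i/Z\rfloor+((i+s)\bmod Z)$ and $\pi^s(\mathcal T)=\{\pi^s(x):x\in\mathcal T\}$. Fix an integer $L>1$. A pair $(S,\mathcal T_0)$ ($S$ a positive integer, $\mathcal T_0\subseteq[MZ)$) is a feasible solution if, with $\mathcal T_l=\pi^{lS}(\mathcal T_0)$ for $l\in[L)$, the sets $\mathcal T_0,\dots,\mathcal T_{L-1}$ are pairwise disjoint with union $[MZ)$. *)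

(* Defs.v *)
From mathcomp Require Import all_boot all_order all_algebra.
Set Implicit Arguments. Unset Strict Implicit. Unset Printing Implicit Defensive.

Definition piN (Z s i : nat) : nat := Z * (i %/ Z) + (i + s) %% Z.

Definition block_circulant (M N Z : nat) (H : 'M[bool]_(M * Z, N * Z)) : Prop :=
  forall (i : 'I_(M * Z)) (j : 'I_(N * Z)) (i' : 'I_(M * Z)) (j' : 'I_(N * Z)),
    val i' = piN Z 1 i -> val j' = piN Z 1 j -> H i' j' = H i j.

Definition no_zero_row (m n : nat) (H : 'M[bool]_(m, n)) : Prop :=
  forall i : 'I_m, exists j : 'I_n, H i j.

Definition distinct_rows (m n : nat) (H : 'M[bool]_(m, n)) : Prop :=
  forall i i' : 'I_m, (forall j, H i j = H i' j) -> i = i'.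

Definition omega_rows (m n : nat) (H : 'M[bool]_(m, n)) (A : {set 'I_m}) : nat :=
  \max_(j < n) #|[set i in A | H i j]|.

Definition shiftset (M Z s : nat) (T0 : {set 'I_(M * Z)}) : {set 'I_(M * Z)} :=
  [set x : 'I_(M * Z) | [exists y in T0, piN Z s (val y) == val x]].

Definition feasible (M Z L S : nat) (T0 : {set 'I_(M * Z)}) : Prop :=
  0 < S /\
  (forall l1 l2, l1 < L -> l2 < L -> l1 != l2 ->
      [disjoint shiftset (l1 * S) T0 & shiftset (l2 * S) T0]) /\
  \bigcup_(l < L) shiftset (l * S) T0 = [set: 'I_(M * Z)].

Definition ceil_div (a b : nat) : nat := (a + b.-1) %/ b.

(* Main.v *)
Require Import Defs.
From mathcomp Require Import all_boot all_order all_algebra.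

Lemma piN_lt K Z s i : 0 < Z -> i < K * Z -> piN Z s i < K * Z.
Proof.
move=> hZ hi; rewrite /piN.
have hq : i %/ Z < K by rewrite ltn_divLR.
have hr : (i + s) %% Z < Z by rewrite ltn_mod.
apply: (@leq_trans (Z * (i %/ Z) + Z)); first by rewrite ltn_add2l.
by rewrite -mulnSr mulnC leq_mul2r hq orbT.
Qed.

Arguments piN_lt {K Z} s {i}.

Lemma piN_comp Z a b i : 0 < Z -> piN Z a (piN Z b i) = piN Z (a + b) i.
Proof.
move=> hZ; rewrite /piN.
have hr : (i + b) %% Z < Z by rewrite ltn_mod.
rewrite [Z * (i %/ Z)]mulnC divnMDl // (divn_small hr) addn0.
congr (_ + _); first exact: mulnC.
rewrite -addnA. rewrite modnMDl modnDml -addnA (addnC b a). by [].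
Qed.

Lemma piN_id Z k i : 0 < Z -> piN Z (k * Z) i = i.
Proof.
move=> hZ; rewrite /piN [i + _]addnC modnMDl mulnC -divn_eq //.
Qed.

Lemma union_bound (T : finType) L (B : 'I_L -> {set T}) :
  #|\bigcup_(l < L) B l| <= \sum_(l < L) #|B l|.
Proof.
apply: (big_ind2 (fun (U : {set T}) n => #|U| <= n)).
- by rewrite cards0.
- move=> U1 n1 U2 n2 h1 h2; apply: leq_trans (leq_card_setU _ _) _.
  exact: leq_add.
- by [].
Qed.

Theorem theorem5 (M N Z L : nat) (H : 'M[bool]_(M * Z, N * Z))
    (S : nat) (T0 : {set 'I_(M * Z)}) :
  0 < M -> 0 < N -> 0 < Z -> 1 < L ->
  block_circulant H -> no_zero_row H -> distinct_rows H ->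
  feasible L S T0 ->
  ceil_div (omega_rows H [set: 'I_(M * Z)]) L <= omega_rows H T0.
Proof.
move=> hM hN hZ hL hbc _ _ [_ [_ hcov]].
set w := omega_rows H T0.
have hit : forall s (i : 'I_(M * Z)) (j : 'I_(N * Z)),
    H (Ordinal (piN_lt s hZ (ltn_ord i))) (Ordinal (piN_lt s hZ (ltn_ord j))) = H i j.
  elim=> [|s IH] i j.
    by congr (H _ _); apply: val_inj; rewrite /= -(mul0n Z) piN_id.
  rewrite -(IH i j).
  apply: hbc => /=; by rewrite piN_comp // add1n.
have hcol : forall j : 'I_(N * Z), #|[set i in [set: 'I_(M * Z)] | H i j]| <= L * w.
  move=> j.
  apply: (@leq_trans (\sum_(l < L) #|[set i in shiftset (l * S) T0 | H i j]|)).
    have hu := union_bound _ _ (fun l : 'I_L => [set i in shiftset (l * S) T0 | H i j]).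
    apply: leq_trans hu.
    apply: subset_leq_card; apply/subsetP => i; rewrite !inE /= => hij.
    have : i \in [set: 'I_(M * Z)] by rewrite inE.
    rewrite -hcov => /bigcupP [l _ hl].
    by apply/bigcupP; exists l => //; rewrite inE hl hij.
  rewrite -[L in L * w]card_ord -sum_nat_const.
  apply: leq_sum => l _.
  set s := l * S.
  set t := s * Z.-1.
  pose j' : 'I_(N * Z) := Ordinal (piN_lt t hZ (ltn_ord j)).
  pose f := fun y : 'I_(M * Z) => Ordinal (piN_lt s hZ (ltn_ord y)).
  apply: (@leq_trans #|[set f y | y in [set y in T0 | H y j']]|); last first.
    apply: leq_trans (leq_imset_card _ _) _.
    rewrite /w /omega_rows.
    exact: (@leq_bigmax _ (fun j => #|[set i in T0 | H i j]|) j').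
  apply: subset_leq_card; apply/subsetP => i; rewrite !inE => /andP [hi hij].
  move: hi => /existsP [y /andP [yT /eqP hy]].
  have -> : i = f y by apply: val_inj.
  apply: imset_f; rewrite inE yT /=.
  rewrite -(hit s y j').
  have -> : Ordinal (piN_lt s hZ (ltn_ord j')) = j.
    apply: val_inj => /=; rewrite piN_comp // addnC /t -mulnSr prednK // piN_id //.
  have e : Ordinal (piN_lt s hZ (ltn_ord y)) = i by apply: val_inj.
  by rewrite e.
have hW : omega_rows H [set: 'I_(M * Z)] <= L * w.
  by apply/bigmax_leqP => j _; apply: hcol.
rewrite /ceil_div.
have hL0 : 0 < L by apply: ltn_trans hL.
apply: (@leq_trans ((w * L + L.-1) %/ L)).
  by apply: leq_div2r; rewrite leq_add2r [w * L]mulnC.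
by rewrite divnMDl // divn_small ?addn0 // prednK.
Qed.
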